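(* The center of $U_3$ is $$Z(U_3)=\{(x_1+f_1,\,x_2,\,x_3)\mid f_1=f_1(x_2,x_3)\in S\}.$$
   Context: $K$ is a field of characteristic zero, $A_3=K\langle x_1,x_2,x_3\rangle$ the free associative $K$-algebra with unity. $U_3$ is the group of unitriangular automorphisms of $A_3$: all automorphisms $(x_1+f_1,\,x_2+f_2,\,x_3+f_3)$ (meaning $x_i\mapsto x_i+f_i$) with $f_1\in K\langle x_2,x_3\rangle$, $f_2\in K\langle x_3\rangle$, $f_3\in K$. $S=\{f\in K\langle x_2,x_3\rangle\mid f(x_2+g(x_3),\,x_3+h)=f(x_2,x_3)\text{ for all }g(x_3)\in K\langle x_3\rangle,\ h\in K\}$. *)

(* Defs.v *)
(* Free associative algebra K<x1,x2,x3> modelled as formal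
   finite linear combinations of words; two such combinations denote the same
   element of A_3 iff all their word-coefficients agree ([peq]). *)
From HB Require Import structures.
From mathcomp Require Import all_boot all_order all_algebra.
Set Implicit Arguments. Unset Strict Implicit. Unset Printing Implicit Defensive.
Import Order.TTheory GRing.Theory Num.Theory.
Local Open Scope ring_scope.

Section FreeAlg.
Variable K : fieldType.

(* letters: (0 : 'I_3) = x1, 1 = x2, 2 = x3 *)
Definition word := seq 'I_3.
Definition ncpoly := seq (K * word).

Definition coef (p : ncpoly) (w : word) : K :=
  \sum_(m <- p) (if m.2 == w then m.1 else 0).

Definition peq (p q : ncpoly) : Prop := forall w, coef p w = coef q w.

Definition padd (p q : ncpoly) : ncpoly := p ++ q.
Definition pscale (c : K) (p : ncpoly) : ncpoly := [seq (c * m.1, m.2) | m <- p].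
Definition pmul (p q : ncpoly) : ncpoly :=
  [seq (a.1 * b.1, a.2 ++ b.2) | a <- p, b <- q].
Definition pconst (c : K) : ncpoly := [:: (c, [::])].
Definition pX (i : 'I_3) : ncpoly := [:: (1, [:: i])].

Definition wsubst (w : word) (g : 'I_3 -> ncpoly) : ncpoly :=
  foldr (fun i acc => pmul (g i) acc) (pconst 1) w.
Definition subst (p : ncpoly) (g : 'I_3 -> ncpoly) : ncpoly :=
  flatten [seq pscale m.1 (wsubst m.2 g) | m <- p].

Definition in_K23 (p : ncpoly) : Prop :=
  forall w, coef p w != 0 -> all (fun i : 'I_3 => (i : nat) != 0%N) w.
Definition in_K3 (p : ncpoly) : Prop :=
  forall w, coef p w != 0 -> all (fun i : 'I_3 => (i : nat) == 2%N) w.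
Definition in_Kconst (p : ncpoly) : Prop :=
  forall w, coef p w != 0 -> w = [::].

Definition x1 : 'I_3 := @Ordinal 3 0 isT.
Definition x2 : 'I_3 := @Ordinal 3 1 isT.
Definition x3 : 'I_3 := @Ordinal 3 2 isT.

(* An endomorphism phi of A_3 is given by the images phi i of the generators.
   Composition: (phi o psi)(x_i) = phi(psi(x_i)) = subst (psi i) phi. *)
Definition is_automorphism (phi : 'I_3 -> ncpoly) : Prop :=
  exists psi : 'I_3 -> ncpoly,
    forall i, peq (subst (psi i) phi) (pX i) /\ peq (subst (phi i) psi) (pX i).

Definition in_U3 (phi : 'I_3 -> ncpoly) : Prop :=
  is_automorphism phi /\
  exists f1 f2 f3 : ncpoly,
    [/\ in_K23 f1, in_K3 f2 & in_Kconst f3] /\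
    [/\ peq (phi x1) (padd (pX x1) f1),
        peq (phi x2) (padd (pX x2) f2) &
        peq (phi x3) (padd (pX x3) f3)].

Definition endo_eq (phi psi : 'I_3 -> ncpoly) : Prop := forall i, peq (phi i) (psi i).
Definition comp (phi psi : 'I_3 -> ncpoly) : 'I_3 -> ncpoly :=
  fun i => subst (psi i) phi.

Definition in_center_U3 (phi : 'I_3 -> ncpoly) : Prop :=
  in_U3 phi /\ forall psi, in_U3 psi -> endo_eq (comp phi psi) (comp psi phi).

Definition in_S (f : ncpoly) : Prop :=
  in_K23 f /\
  forall g h : ncpoly, in_K3 g -> in_Kconst h ->
    peq (subst f (fun i => if i == x1 then pX x1
                           else if i == x2 then padd (pX x2) g
                           else padd (pX x3) h)) f.

End FreeAlg.

(* Main.v *)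
Require Import Defs.
From HB Require Import structures.
From mathcomp Require Import all_boot all_order all_algebra.
From mathcomp Require Import ring.
Import GRing.Theory.
Local Open Scope ring_scope.

Set Implicit Arguments. Unset Strict Implicit. Unset Printing Implicit Defensive.

Section Infra.
Variable K : fieldType.
Implicit Types p q r : ncpoly K.

Lemma coef_nil w : coef ([::] : ncpoly K) w = 0.
Proof. by rewrite /coef big_nil. Qed.
Lemma coef_cons (m : K * word) p w :
  coef (m :: p) w = (if m.2 == w then m.1 else 0) + coef p w.
Proof. by rewrite /coef big_cons. Qed.
Lemma coef_cat p q w : coef (p ++ q) w = coef p w + coef q w.
Proof. by rewrite /coef big_cat. Qed.
Lemma coef_padd p q w : coef (padd p q) w = coef p w + coef q w.
Proof. exact: coef_cat. Qed.
Lemma coef_pscale c p w : coef (pscale c p) w = c * coef p w.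
Proof.
rewrite /coef big_map mulr_sumr; apply: eq_bigr => m _ /=.
by case: ifP; rewrite ?mulr0.
Qed.
Lemma coef_pX i w : coef (pX K i) w = if [:: i] == w then 1 else 0.
Proof. by rewrite coef_cons coef_nil addr0. Qed.
Lemma coefE p w : coef p w = \sum_(m <- p) m.1 * (if m.2 == w then 1 else 0).
Proof. apply: eq_bigr => m _; by case: ifP; rewrite ?mulr1 ?mulr0. Qed.

Lemma peq_refl p : peq p p. Proof. by []. Qed.
Lemma peq_sym p q : peq p q -> peq q p. Proof. by move=> H w; rewrite H. Qed.
Lemma peq_trans p q r : peq p q -> peq q r -> peq p r.
Proof. by move=> H1 H2 w; rewrite H1 H2. Qed.

Lemma lin_eval p (F : word -> K) (S : seq word) : uniq S ->
  {subset [seq m.2 | m <- p] <= S} ->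
  \sum_(m <- p) m.1 * F m.2 = \sum_(u <- S) coef p u * F u.
Proof.
move=> uS; elim: p => [|a p IH] sub.
  by rewrite big_nil big1 // => u _; rewrite coef_nil mul0r.
rewrite big_cons IH; last by move=> u Hu; apply: sub; rewrite /= inE Hu orbT.
have aS : a.2 \in S by apply: sub; rewrite /= inE eqxx.
under [RHS]eq_bigr => u _ do rewrite coef_cons mulrDl.
rewrite big_split /=; congr (_ + _).
rewrite (bigD1_seq a.2) //= eqxx big1 ?addr0 // => u /negbTE Hu.
by rewrite eq_sym Hu mul0r.
Qed.

Lemma lin_peq p q (F : word -> K) : peq p q ->
  \sum_(m <- p) m.1 * F m.2 = \sum_(m <- q) m.1 * F m.2.
Proof.
move=> H; set S := undup [seq m.2 | m <- p ++ q].
have uS : uniq S by apply: undup_uniq.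
have s1 : {subset [seq m.2 | m <- p] <= S}.
  by move=> u Hu; rewrite mem_undup map_cat mem_cat Hu.
have s2 : {subset [seq m.2 | m <- q] <= S}.
  by move=> u Hu; rewrite mem_undup map_cat mem_cat Hu orbT.
rewrite (lin_eval F uS s1) (lin_eval F uS s2).
by apply: eq_bigr => u _; rewrite H.
Qed.

Lemma coef_pmul p q w : coef (pmul p q) w =
  \sum_(a <- p) a.1 * \sum_(b <- q) b.1 * (if a.2 ++ b.2 == w then 1 else 0).
Proof.
rewrite /coef /pmul big_allpairs_dep; apply: eq_bigr => a _; rewrite mulr_sumr.
apply: eq_bigr => b _ /=; case: ifP => _; by rewrite ?mulr1 ?mulr0 ?mulrA.
Qed.

Lemma coef_pmul2 p q w : coef (pmul p q) w =
  \sum_(b <- q) b.1 * \sum_(a <- p) a.1 * (if a.2 ++ b.2 == w then 1 else 0).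
Proof.
rewrite coef_pmul; under eq_bigr => a _ do rewrite mulr_sumr.
rewrite exchange_big; apply: eq_bigr => b _; rewrite mulr_sumr.
by apply: eq_bigr => a _; rewrite mulrCA.
Qed.

Lemma pmul_peq p p' q q' : peq p p' -> peq q q' -> peq (pmul p q) (pmul p' q').
Proof.
move=> Hp Hq w; transitivity (coef (pmul p' q) w).
  rewrite !coef_pmul.
  exact: (lin_peq (fun u => \sum_(b <- q) b.1 * (if u ++ b.2 == w then 1 else 0)) Hp).
rewrite !coef_pmul2.
exact: (lin_peq (fun v => \sum_(a <- p') a.1 * (if a.2 ++ v == w then 1 else 0)) Hq).
Qed.

Lemma wsubst_nil g : wsubst [::] g = pconst (1 : K). Proof. by []. Qed.
Lemma wsubst_cons i w (g : 'I_3 -> ncpoly K) :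
  wsubst (i :: w) g = pmul (g i) (wsubst w g).
Proof. by []. Qed.

Lemma wsubst_peq w (g g' : 'I_3 -> ncpoly K) :
  (forall i, i \in w -> peq (g i) (g' i)) -> peq (wsubst w g) (wsubst w g').
Proof.
elim: w => [|i w IH] H; first by [].
rewrite !wsubst_cons; apply: pmul_peq; first by apply: H; rewrite inE eqxx.
by apply: IH => j Hj; apply: H; rewrite inE Hj orbT.
Qed.

Lemma sum_subst p (g : 'I_3 -> ncpoly K) (G : word -> K) :
  \sum_(x <- subst p g) x.1 * G x.2 =
  \sum_(m <- p) m.1 * \sum_(x <- wsubst m.2 g) x.1 * G x.2.
Proof.
rewrite /subst big_flatten big_map; apply: eq_bigr => m _.
rewrite /pscale big_map mulr_sumr; apply: eq_bigr => x _ /=.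
by rewrite mulrA.
Qed.

Lemma coef_subst p g w :
  coef (subst p g) w = \sum_(m <- p) m.1 * coef (wsubst m.2 g) w.
Proof.
rewrite coefE (sum_subst p g (fun v => if v == w then 1 else 0)); apply: eq_bigr => m _; by rewrite -coefE.
Qed.

Lemma subst_peql p p' g : peq p p' -> peq (subst p g) (subst p' g).
Proof.
move=> H w; rewrite !coef_subst.
exact: (lin_peq (fun u => coef (wsubst u g) w) H).
Qed.

Lemma subst_peq_supp p g g' :
  (forall w, coef p w != 0 -> peq (wsubst w g) (wsubst w g')) ->
  peq (subst p g) (subst p g').
Proof.
move=> H u; rewrite !coef_subst.
set S := undup [seq m.2 | m <- p].
have uS : uniq S by apply: undup_uniq.
have sS : {subset [seq m.2 | m <- p] <= S} by move=> v; rewrite mem_undup.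
rewrite (lin_eval (fun v => coef (wsubst v g) u) uS sS).
rewrite (lin_eval (fun v => coef (wsubst v g') u) uS sS).
apply: eq_bigr => v _; have [->|nz] := eqVneq (coef p v) 0; first by rewrite !mul0r.
by rewrite (H v nz).
Qed.

Lemma subst_peqr p g g' : (forall i, peq (g i) (g' i)) ->
  peq (subst p g) (subst p g').
Proof. by move=> H; apply: subst_peq_supp => w _; apply: wsubst_peq. Qed.

Lemma subst_padd p q g : subst (padd p q) g = padd (subst p g) (subst q g).
Proof. by rewrite /subst /padd map_cat flatten_cat. Qed.

Lemma subst_pscale c p g : peq (subst (pscale c p) g) (pscale c (subst p g)).
Proof.
move=> w; rewrite coef_pscale !coef_subst /pscale big_map mulr_sumr.
by apply: eq_bigr => m _ /=; rewrite mulrA.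
Qed.

Lemma pmul_1r q : peq (pmul q (pconst 1)) q.
Proof.
move=> w; rewrite coef_pmul coefE; apply: eq_bigr => a _.
by rewrite big_cons big_nil /= cats0 mul1r addr0.
Qed.

Lemma pmul_1l q : peq (pmul (pconst 1) q) q.
Proof.
move=> w; rewrite coef_pmul big_cons big_nil addr0 mul1r coefE.
by apply: eq_bigr => b _.
Qed.

Lemma subst_pX i g : peq (subst (pX K i) g) (g i).
Proof.
move=> w; rewrite coef_subst big_cons big_nil addr0 mul1r.
exact: (pmul_1r (g i) w).
Qed.

Lemma wsubst_id w (g : 'I_3 -> ncpoly K) :
  (forall i, i \in w -> peq (g i) (pX K i)) -> peq (wsubst w g) [:: (1, w)].
Proof.
elim: w => [|i w IH] H; first by [].
rewrite wsubst_cons; apply: peq_trans.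
  apply: pmul_peq; first by apply: H; rewrite inE eqxx.
  by apply: IH => j Hj; apply: H; rewrite inE Hj orbT.
move=> u; rewrite coef_pmul !big_cons !big_nil /= !addr0 !mul1r coef_cons coef_nil addr0.
by case: ifP.
Qed.

Lemma subst_fix p g :
  (forall w, coef p w != 0 -> forall i, i \in w -> peq (g i) (pX K i)) ->
  peq (subst p g) p.
Proof.
move=> H u; rewrite coef_subst coefE.
set S := undup [seq m.2 | m <- p].
have uS : uniq S by apply: undup_uniq.
have sS : {subset [seq m.2 | m <- p] <= S} by move=> v; rewrite mem_undup.
rewrite (lin_eval (fun v => coef (wsubst v g) u) uS sS).
rewrite (lin_eval (fun v => if v == u then 1 else 0) uS sS).
apply: eq_bigr => v _; have [->|nz] := eqVneq (coef p v) 0; first by rewrite !mul0r.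
by rewrite (wsubst_id (H v nz)) coef_cons coef_nil addr0.
Qed.

Lemma pmul_assoc p q r : peq (pmul (pmul p q) r) (pmul p (pmul q r)).
Proof.
move=> w; rewrite /coef /pmul big_allpairs_dep [RHS]big_allpairs_dep big_allpairs_dep.
under [RHS]eq_bigr => a _ do rewrite big_allpairs_dep.
apply: eq_bigr => a _; apply: eq_bigr => b _; apply: eq_bigr => c _ /=.
by rewrite catA mulrA.
Qed.

Lemma wsubst_cat u v (g : 'I_3 -> ncpoly K) :
  peq (wsubst (u ++ v) g) (pmul (wsubst u g) (wsubst v g)).
Proof.
elim: u => [|i u IH]; first by apply: peq_sym; apply: pmul_1l.
rewrite cat_cons !wsubst_cons; apply: peq_trans (peq_sym (pmul_assoc _ _ _)).
exact: pmul_peq.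
Qed.

Lemma subst_pmul p q g : peq (subst (pmul p q) g) (pmul (subst p g) (subst q g)).
Proof.
move=> w; rewrite coef_pmul (sum_subst p g (fun v => \sum_(b <- subst q g) b.1 * (if v ++ b.2 == w then 1 else 0))).
rewrite coef_subst /pmul big_allpairs_dep.
apply: eq_bigr => a _ /=.
under eq_bigr => b _ do rewrite (wsubst_cat a.2 b.2 g w) coef_pmul.
rewrite [RHS]mulr_sumr.
under [RHS]eq_bigr => x _ do rewrite (sum_subst q g (fun v => if x.2 ++ v == w then 1 else 0)) mulr_sumr mulr_sumr.
rewrite [RHS]exchange_big; apply: eq_bigr => b _ /=.
rewrite mulr_sumr; apply: eq_bigr => x _.
by rewrite -!mulrA; congr (_ * _); rewrite mulrCA.
Qed.

Lemma subst_pconst1 (g : 'I_3 -> ncpoly K) : peq (subst (pconst (1 : K)) g) (pconst 1).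
Proof. by move=> w; rewrite coef_subst big_cons big_nil mul1r addr0. Qed.

Lemma wsubst_comp u (tau rho : 'I_3 -> ncpoly K) :
  peq (subst (wsubst u tau) rho) (wsubst u (fun i => subst (tau i) rho)).
Proof.
elim: u => [|i u IH]; first exact: subst_pconst1.
rewrite !wsubst_cons; apply: peq_trans (subst_pmul _ _ _) _.
exact: pmul_peq.
Qed.

Lemma subst_comp p (tau rho : 'I_3 -> ncpoly K) :
  peq (subst (subst p tau) rho) (subst p (fun i => subst (tau i) rho)).
Proof.
move=> w; rewrite coef_subst (coef_subst p).
rewrite (sum_subst p tau (fun v => coef (wsubst v rho) w)).
apply: eq_bigr => m _; congr (_ * _); rewrite -coef_subst.
exact: wsubst_comp.
Qed.

End Infra.

Section Main.
Variable K : fieldType.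

Definition E (k : 'I_3) (e : ncpoly K) : 'I_3 -> ncpoly K :=
  fun i => if i == k then padd (pX K k) e else pX K i.
Definition supp (k : 'I_3) (e : ncpoly K) :=
  forall w, coef e w != 0 -> forall i, i \in w -> i != k.

Lemma E_eq k e : E k e k = padd (pX K k) e.
Proof. by rewrite /E eqxx. Qed.
Lemma E_ne k e i : i != k -> E k e i = pX K i.
Proof. by rewrite /E => /negbTE ->. Qed.

Lemma ord3 (i : 'I_3) : i = x1 \/ i = x2 \/ i = x3.
Proof.
case: i => [[|[|[|n]]] Hi]; [left|right;left|right;right|by []]; exact: val_inj.
Qed.

Lemma supp_fix k e (g : 'I_3 -> ncpoly K) : supp k e ->
  (forall i, i != k -> peq (g i) (pX K i)) -> peq (subst e g) e.
Proof. move=> He Hg; apply: subst_fix => w Hw i Hi; apply: Hg; exact: He Hw i Hi. Qed.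

Lemma K23_supp (f : ncpoly K) : in_K23 f -> supp x1 f.
Proof.
move=> Hf w /Hf /allP Hw i /Hw /= Hi; apply/eqP => Ei.
by move: Hi; rewrite Ei.
Qed.

Lemma K3_supp (f : ncpoly K) (k : 'I_3) : in_K3 f -> (k : nat) != 2%N -> supp k f.
Proof.
move=> Hf Hk w /Hf /allP Hw i /Hw /eqP Hi; apply/eqP => Eik.
by move: Hk; rewrite -Eik Hi.
Qed.

Lemma Kc_supp (f : ncpoly K) (k : 'I_3) : in_Kconst f -> supp k f.
Proof. by move=> Hf w /Hf -> i; rewrite in_nil. Qed.

Lemma E_comp k e e' : supp k e -> (forall w, coef e w + coef e' w = 0) ->
  forall i, peq (subst (E k e i) (E k e')) (pX K i).
Proof.
move=> He Hs i; case: (eqVneq i k) => [->|Hik].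
  move=> w; rewrite E_eq subst_padd coef_padd (subst_pX k (E k e') w) E_eq coef_padd.
  rewrite (supp_fix (g := E k e') He) => [|j Hj]; last by rewrite E_ne.
  by rewrite -addrA (addrC (coef e' w)) Hs addr0.
by move=> w; rewrite E_ne // (subst_pX i (E k e') w) E_ne.
Qed.

Lemma E_auto k e : supp k e -> is_automorphism (E k e).
Proof.
move=> He; exists (E k (pscale (-1) e)) => i; split; apply: E_comp => //.
- by move=> w; rewrite coef_pscale mulN1r oppr_eq0; exact: He w.
- by move=> w; rewrite coef_pscale mulN1r addNr.
- by move=> w; rewrite coef_pscale mulN1r addrN.
Qed.

Lemma auto_eq (phi phi' : 'I_3 -> ncpoly K) : endo_eq phi phi' -> is_automorphism phi' -> is_automorphism phi.
Proof.
move=> Heq [psi H]; exists psi => i; case: (H i) => H1 H2; split.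
- apply: peq_trans H1; apply: subst_peqr => j; exact: Heq j.
- apply: peq_trans H2; apply: subst_peql; exact: Heq i.
Qed.

Lemma K3_nil : in_K3 ([::] : ncpoly K).
Proof. by move=> w; rewrite coef_nil eqxx. Qed.
Lemma Kc_nil : in_Kconst ([::] : ncpoly K).
Proof. by move=> w; rewrite coef_nil eqxx. Qed.
Lemma padd_nil p : peq p (padd p ([::] : ncpoly K)).
Proof. by move=> w; rewrite coef_padd coef_nil addr0. Qed.

Lemma U3_E1 e : in_K23 e -> in_U3 (E x1 e).
Proof.
move=> He; split; first exact: E_auto (K23_supp He).
exists e, [::], [::]; split; first by split; [exact: He|exact: K3_nil|exact: Kc_nil].
split.
- by rewrite E_eq.
- by rewrite E_ne //; apply: padd_nil.
- by rewrite E_ne //; apply: padd_nil.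
Qed.

Lemma K23_nil : in_K23 ([::] : ncpoly K).
Proof. by move=> w; rewrite coef_nil eqxx. Qed.

Lemma U3_E2 e : in_K3 e -> in_U3 (E x2 e).
Proof.
move=> He; split; first exact: E_auto (K3_supp He _).
exists [::], e, [::]; split; first by split; [exact: K23_nil|exact: He|exact: Kc_nil].
split.
- by rewrite E_ne //; apply: padd_nil.
- by rewrite E_eq.
- by rewrite E_ne //; apply: padd_nil.
Qed.

Lemma U3_E3 e : in_Kconst e -> in_U3 (E x3 e).
Proof.
move=> He; split; first exact: E_auto (Kc_supp _ He).
exists [::], [::], e; split; first by split; [exact: K23_nil|exact: K3_nil|exact: He].
split.
- by rewrite E_ne //; apply: padd_nil.
- by rewrite E_ne //; apply: padd_nil.
- by rewrite E_eq.
Qed.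

End Main.

Lemma cancel4 (K : fieldType) (a b c d : K) : a + c + (b + d) = a + b + c -> d = 0.
Proof.
move=> H; apply: (@addrI _ (a + b + c)); rewrite addr0 -[RHS]H; ring.
Qed.

Lemma x21 : (x2 == x1) = false. Proof. by []. Qed.
Lemma x31 : (x3 == x1) = false. Proof. by []. Qed.
Lemma x32 : (x3 == x2) = false. Proof. by []. Qed.
Lemma x22 : (x2 == x2) = true. Proof. by []. Qed.

Lemma compE (K : fieldType) (phi psi : 'I_3 -> ncpoly K) i :
  Defs.comp phi psi i = subst (psi i) phi.
Proof. by []. Qed.

Unset Implicit Arguments.

Theorem theorem1 (K : fieldType) (charK0 : [pchar K] =i pred0)
  (phi : 'I_3 -> ncpoly K) :
  in_center_U3 phi <->
  exists f1 : ncpoly K,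
    in_S f1 /\
    endo_eq phi (fun i => if i == x1 then padd (pX K x1) f1 else pX K i).
Proof.
split.
- move=> [[aut [f1 [f2 [f3 [[Hf1 Hf2 Hf3] [H1 H2 H3]]]]]] C].
  have f2z : forall w, coef f2 w = 0.
    have Hx2 : in_K23 (pX K x2).
      by move=> w; rewrite coef_pX; case: ifP => [/eqP <- _ //|_]; rewrite eqxx.
    move=> w; have := C _ (U3_E1 Hx2) x1 w; rewrite !compE.
    rewrite E_eq subst_padd coef_padd (subst_pX x1 phi w) (subst_pX x2 phi w).
    rewrite (H1 w) (H2 w) !coef_padd (subst_peql _ H1 w) subst_padd coef_padd.
    rewrite (subst_pX x1 _ w) E_eq coef_padd.
    rewrite (supp_fix (g := E x1 (pX K x2)) (K23_supp Hf1)) => [|j Hj]; last by rewrite E_ne.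
    exact: cancel4.
  have f3z : forall w, coef f3 w = 0.
    have Hx3 : in_K3 (pX K x3).
      by move=> w; rewrite coef_pX; case: ifP => [/eqP <- _ //|_]; rewrite eqxx.
    move=> w; have := C _ (U3_E2 Hx3) x2 w; rewrite !compE.
    rewrite E_eq subst_padd coef_padd (subst_pX x2 phi w) (subst_pX x3 phi w).
    rewrite (H2 w) (H3 w) !coef_padd (subst_peql _ H2 w) subst_padd coef_padd.
    rewrite (subst_pX x2 _ w) E_eq coef_padd.
    rewrite (supp_fix (g := E x2 (pX K x3)) (K3_supp Hf2 (k := x2) isT)) => [|j Hj]; last by rewrite E_ne.
    exact: cancel4.
  have S1 : forall g, in_K3 g -> peq (subst f1 (E x2 g)) f1.
    move=> g Hg w; have := C _ (U3_E2 Hg) x1 w; rewrite !compE.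
    rewrite E_ne // (subst_pX x1 phi w) (H1 w) (subst_peql _ H1 w) subst_padd !coef_padd.
    rewrite (subst_pX x1 _ w) E_ne //.
    by move/addrI.
  have S2 : forall h, in_Kconst h -> peq (subst f1 (E x3 h)) f1.
    move=> h Hh w; have := C _ (U3_E3 Hh) x1 w; rewrite !compE.
    rewrite E_ne // (subst_pX x1 phi w) (H1 w) (subst_peql _ H1 w) subst_padd !coef_padd.
    rewrite (subst_pX x1 _ w) E_ne //.
    by move/addrI.
  exists f1; split.
    split => // g h Hg Hh.
    apply: peq_trans _ (S1 g Hg).
    have Y := (subst_peql (E x2 g) (S2 h Hh)).
    eapply peq_trans; last exact Y.
    eapply peq_trans; last exact (peq_sym (subst_comp f1 (E x3 h) (E x2 g))).
    apply: subst_peqr => i; case: (ord3 i) => [->|[->|->]] w.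
    + by rewrite E_ne // (subst_pX x1 _ w) E_ne.
    + by rewrite E_ne // (subst_pX x2 _ w) E_eq.
    + transitivity (coef (padd (pX K x3) h) w); first by [].
      rewrite E_eq subst_padd !coef_padd (subst_pX x3 _ w) E_ne //.
      rewrite (supp_fix (g := E x2 g) (Kc_supp x2 Hh)) => [//|j Hj].
      by rewrite E_ne.
  change (endo_eq phi (E x1 f1)) => i; case: (ord3 i) => [->|[->|->]] w.
  + by rewrite E_eq (H1 w).
  + by rewrite E_ne // (H2 w) coef_padd f2z addr0.
  + by rewrite E_ne // (H3 w) coef_padd f3z addr0.
- move=> [f1 [[Hf1 HS] Heq]].
  change (endo_eq phi (E x1 f1)) in Heq.
  have phi1 : peq (phi x1) (padd (pX K x1) f1) by move=> w; rewrite (Heq x1 w) E_eq.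
  have fixphi : forall i, i != x1 -> peq (phi i) (pX K i).
    by move=> i Hi w; rewrite (Heq i w) E_ne.
  split.
    split; first exact: auto_eq Heq (E_auto (K23_supp Hf1)).
    exists f1, [::], [::]; split; first by split; [exact: Hf1|exact: K3_nil|exact: Kc_nil].
    split; first exact: phi1.
    + by apply: peq_trans (fixphi x2 isT) _; apply: padd_nil.
    + by apply: peq_trans (fixphi x3 isT) _; apply: padd_nil.
  move=> psi [_ [a [b [c [[Ha Hb Hc] [Hp1 Hp2 Hp3]]]]]] i; rewrite !compE.
  case: (ord3 i) => [->|[->|->]] w.
  + have sf : peq (subst f1 psi) f1.
      apply: peq_trans _ (HS b c Hb Hc).
      apply: subst_peq_supp => u Hu; apply: wsubst_peq => j Hj.
      have := K23_supp Hf1 Hu Hj; case: (ord3 j) => [->|[->|->]] Hne.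
      * by rewrite eqxx in Hne.
      * by rewrite x21 x22.
      * by rewrite x31 x32.
    rewrite (subst_peql phi Hp1 w) (subst_peql psi phi1 w) (subst_padd (pX K x1) a phi) (subst_padd (pX K x1) f1 psi)
      (coef_padd (subst (pX K x1) phi)) (coef_padd (subst (pX K x1) psi)).
    rewrite (subst_pX x1 phi w) (subst_pX x1 psi w) (phi1 w) (Hp1 w) (sf w) !coef_padd.
    rewrite (supp_fix (g := phi) (K23_supp Ha) fixphi w).
    ring.
  + rewrite (subst_peql phi Hp2 w) (subst_peql psi (fixphi x2 isT) w) (subst_padd (pX K x2) b phi)
      (coef_padd (subst (pX K x2) phi)).
    rewrite (subst_pX x2 phi w) (subst_pX x2 psi w) (fixphi x2 isT w) (Hp2 w) !coef_padd.
    by rewrite (supp_fix (g := phi) (K3_supp (k := x1) Hb isT) fixphi w).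
  + rewrite (subst_peql phi Hp3 w) (subst_peql psi (fixphi x3 isT) w) (subst_padd (pX K x3) c phi)
      (coef_padd (subst (pX K x3) phi)).
    rewrite (subst_pX x3 phi w) (subst_pX x3 psi w) (fixphi x3 isT w) (Hp3 w) !coef_padd.
    by rewrite (supp_fix (g := phi) (Kc_supp x1 Hc) fixphi w).
Qed.
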